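(* Let $G$ be a two-player stage game and consider the pure-pure regime. There exist a positive integer $T$ and an SPE of $G(T)$ (in the pure-pure regime) in which locally suboptimal behavior occurs if and only if at least one of the following holds: (1) $|V_1^{p,p}|>1$, $|V_2^{p,p}|>1$, and there exist $\hat a_1\in A_1,\hat a_2\in A_2$ with $(\hat a_1,\hat a_2)\notin \mathrm{Nash}^{p,p}(G)$; (2) $|V_1^{p,p}|>1$, $|V_2^{p,p}|=1$, and there exist $\hat a_1,a_1'\in A_1$, $\hat a_2\in A_2$ with $u_1(\hat a_1,\hat a_2)<u_1(a_1',\hat a_2)$ and $\hat a_2$ a best response to $\hat a_1$; (3) $|V_1^{p,p}|=1$, $|V_2^{p,p}|>1$, and there exist $\hat a_1\in A_1$, $\hat a_2,a_2'\in A_2$ with $u_2(\hat a_1,\hat a_2)<u_2(\hat a_1,a_2')$ and $\hat a_1$ a best response to $\hat a_2$.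
   Context: A two-player stage game $G$ consists of finite nonempty action sets $A_1,A_2$ and payoff functions $u_1,u_2:A_1\times A_2\to\mathbb{R}$. An action $a_i$ is a best response to the opponent's action if it maximizes player $i$'s payoff against it. For an integer $T\ge 1$, $G(T)$ is the $T$-round repetition of $G$ in which after each round both realized actions are observed and each player's payoff is the sum of stage payoffs over the $T$ rounds. In the pure-pure regime, both players are restricted to pure strategies: a strategy of player $i$ in $G(T)$ is a map $\mu_i:\bigcup_{k=0}^{T-1}(A_1\times A_2)^k\to A_i$ from histories to actions, and deviations are restricted to such strategies. A strategy profile $\mu$ of $G(T)$ is a subgame-perfect equilibrium (SPE) if for every $0\le k<T$ and every history $h$ of length $k$, the continuation profile $\mu_{|h}$ (defined by $\mu_{i|h}(h')=\mu_i(h,h')$) is a Nash equilibrium of $G(T-k)$. $\mathrm{Nash}^{p,p}(G)$ is the set of pure action profiles of $G$ that are Nash equilibria (no player gains by a unilateral deviation to another action), and $V_i^{p,p}=\{u_i(a):a\in\mathrm{Nash}^{p,p}(G)\}$. Locally suboptimal behavior occurs in an SPE $\mu$ of $G(T)$ if there exist $0\le k<T$ and a history $h$ of length $k$ with $(\mu_1(h),\mu_2(h))\notin\mathrm{Nash}^{p,p}(G)$. *)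

(* Defs.v *)
From HB Require Import structures.
From mathcomp Require Import all_boot all_order all_algebra.
From mathcomp Require Import reals.
Set Implicit Arguments. Unset Strict Implicit. Unset Printing Implicit Defensive.
Import Order.TTheory GRing.Theory Num.Theory.
Local Open Scope ring_scope.

Section Game.
Variables (R : realType) (A1 A2 : finType) (u1 u2 : A1 -> A2 -> R).

Definition history := seq (A1 * A2).
Definition strat1 := history -> A1.
Definition strat2 := history -> A2.

Definition best_resp1 (a1 : A1) (a2 : A2) : bool := [forall a1', u1 a1' a2 <= u1 a1 a2].
Definition best_resp2 (a1 : A1) (a2 : A2) : bool := [forall a2', u2 a1 a2' <= u2 a1 a2].

Definition stage_nash (a : A1 * A2) : bool := best_resp1 a.1 a.2 && best_resp2 a.1 a.2.

(* V_i^{p,p} as duplicate-free lists of values; |V_i| = size *)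
Definition V1 : seq R :=
  undup [seq u1 a.1 a.2 | a <- enum {: A1 * A2} & stage_nash a].
Definition V2 : seq R :=
  undup [seq u2 a.1 a.2 | a <- enum {: A1 * A2} & stage_nash a].

Fixpoint play (s1 : strat1) (s2 : strat2) (t : nat) : history :=
  match t with
  | 0 => [::]
  | t'.+1 => let h := play s1 s2 t' in rcons h (s1 h, s2 h)
  end.

Definition payoff1 (T : nat) (s1 : strat1) (s2 : strat2) : R :=
  \sum_(t < T) u1 (s1 (play s1 s2 t)) (s2 (play s1 s2 t)).
Definition payoff2 (T : nat) (s1 : strat1) (s2 : strat2) : R :=
  \sum_(t < T) u2 (s1 (play s1 s2 t)) (s2 (play s1 s2 t)).

Definition nashT (T : nat) (s1 : strat1) (s2 : strat2) : Prop :=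
  (forall s1' : strat1, payoff1 T s1' s2 <= payoff1 T s1 s2) /\
  (forall s2' : strat2, payoff2 T s1 s2' <= payoff2 T s1 s2).

Definition cont1 (s1 : strat1) (h : history) : strat1 := fun h' => s1 (h ++ h').
Definition cont2 (s2 : strat2) (h : history) : strat2 := fun h' => s2 (h ++ h').

Definition SPE (T : nat) (s1 : strat1) (s2 : strat2) : Prop :=
  forall (k : nat) (h : history), (k < T)%N -> size h = k ->
    nashT (T - k) (cont1 s1 h) (cont2 s2 h).

Definition locally_suboptimal (T : nat) (s1 : strat1) (s2 : strat2) : Prop :=
  exists (k : nat) (h : history), [/\ (k < T)%N, size h = k & ~ stage_nash (s1 h, s2 h)].

End Game.

(* Main.v *)
Require Import Defs.
From HB Require Import structures.
From mathcomp Require Import all_boot all_order all_algebra.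
From mathcomp Require Import reals.
From mathcomp Require Import zify lra.
From Stdlib Require Import Classical FunctionalExtensionality.
Set Implicit Arguments. Unset Strict Implicit. Unset Printing Implicit Defensive.
Import Order.TTheory GRing.Theory Num.Theory.
Local Open Scope ring_scope.
Section Aux.
Variables (R : realType) (A1 A2 : finType) (u1 u2 : A1 -> A2 -> R).

Lemma size_play (s1 : strat1 A1 A2) (s2 : strat2 A1 A2) t : size (play s1 s2 t) = t.
Proof. by elim: t => //= t IH; rewrite size_rcons IH. Qed.

Lemma play_S (s1 : strat1 A1 A2) (s2 : strat2 A1 A2) t :
  play s1 s2 t.+1 = (s1 [::], s2 [::]) ::
     play (cont1 s1 [:: (s1 [::], s2 [::])]) (cont2 s2 [:: (s1 [::], s2 [::])]) t.
Proof. by elim: t => //= t ->. Qed.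

Lemma payoff1_S T (s1 : strat1 A1 A2) (s2 : strat2 A1 A2) :
  payoff1 u1 T.+1 s1 s2 = u1 (s1 [::]) (s2 [::]) +
     payoff1 u1 T (cont1 s1 [:: (s1 [::], s2 [::])]) (cont2 s2 [:: (s1 [::], s2 [::])]).
Proof.
rewrite /payoff1 big_ord_recl; congr (_ + _).
by apply: eq_bigr => i _; rewrite lift0 play_S.
Qed.

Lemma payoff2_S T (s1 : strat1 A1 A2) (s2 : strat2 A1 A2) :
  payoff2 u2 T.+1 s1 s2 = u2 (s1 [::]) (s2 [::]) +
     payoff2 u2 T (cont1 s1 [:: (s1 [::], s2 [::])]) (cont2 s2 [:: (s1 [::], s2 [::])]).
Proof.
rewrite /payoff2 big_ord_recl; congr (_ + _).
by apply: eq_bigr => i _; rewrite lift0 play_S.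
Qed.

Definition fs1 (f : nat -> A1 * A2) : strat1 A1 A2 := fun h => (f (size h)).1.
Definition fs2 (f : nat -> A1 * A2) : strat2 A1 A2 := fun h => (f (size h)).2.

Lemma payoff1_fs f T : payoff1 u1 T (fs1 f) (fs2 f) = \sum_(t < T) u1 (f t).1 (f t).2.
Proof. by apply: eq_bigr => i _; rewrite /fs1 /fs2 size_play. Qed.
Lemma payoff2_fs f T : payoff2 u2 T (fs1 f) (fs2 f) = \sum_(t < T) u2 (f t).1 (f t).2.
Proof. by apply: eq_bigr => i _; rewrite /fs1 /fs2 size_play. Qed.

Lemma dev1_fs f T (s1' : strat1 A1 A2) : (forall t, stage_nash u1 u2 (f t)) ->
  payoff1 u1 T s1' (fs2 f) <= \sum_(t < T) u1 (f t).1 (f t).2.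
Proof.
move=> Hf; apply: ler_sum => i _; rewrite /fs2 size_play.
by have /andP[/forallP H _] := Hf i; apply: H.
Qed.
Lemma dev2_fs f T (s2' : strat2 A1 A2) : (forall t, stage_nash u1 u2 (f t)) ->
  payoff2 u2 T (fs1 f) s2' <= \sum_(t < T) u2 (f t).1 (f t).2.
Proof.
move=> Hf; apply: ler_sum => i _; rewrite /fs1 size_play.
by have /andP[_ /forallP H] := Hf i; apply: H.
Qed.

Lemma nash_fs f T : (forall t, stage_nash u1 u2 (f t)) -> nashT u1 u2 T (fs1 f) (fs2 f).
Proof.
move=> Hf; split=> s'.
  by rewrite payoff1_fs; apply: dev1_fs.
by rewrite payoff2_fs; apply: dev2_fs.
Qed.


Lemma gap_incentive (X : finType) (w : X -> R) (c a b : R) : a < b ->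
  exists n : nat, forall x, w x + a *+ n <= c + b *+ n.
Proof.
move=> ab; set g := b - a; have g0 : 0 < g by rewrite /g subr_gt0.
set M := \sum_x `|w x - c|.
have M0 : 0 <= M by apply: sumr_ge0 => x _.
have := archi_boundP (divr_ge0 M0 (ltW g0)).
set n := Num.Def.archi_bound _ => Hn.
exists n => x.
have Hx : w x - c <= M.
  apply: le_trans (ler_norm _) _.
  by rewrite /M (bigD1 x) //= ler_wpDr // sumr_ge0.
have HM : M <= g *+ n.
  rewrite -mulr_natl; have := ltW Hn.
  by rewrite -(ler_pM2r g0) mulrVK ?unitfE ?gt_eqF // mulrC.
move: HM; rewrite /g mulrnBl => HM; lra.
Qed.

Section Cstr.
Variables (a1h : A1) (a2h : A2) (r1 P1 r2 P2 : A1 * A2) (n1 n2 : nat).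
Hypotheses (Hr1 : stage_nash u1 u2 r1) (HP1 : stage_nash u1 u2 P1)
  (Hr2 : stage_nash u1 u2 r2) (HP2 : stage_nash u1 u2 P2).
Hypothesis I1 : forall x1, u1 x1 a2h + u1 P1.1 P1.2 *+ n1 <= u1 a1h a2h + u1 r1.1 r1.2 *+ n1.
Hypothesis I2 : forall x2, u2 a1h x2 + u2 P2.1 P2.2 *+ n2 <= u2 a1h a2h + u2 r2.1 r2.2 *+ n2.

Definition plan (x : A1 * A2) (k : nat) : A1 * A2 :=
  if (k < n1)%N then (if x.1 == a1h then r1 else P1) else (if x.2 == a2h then r2 else P2).

Definition S1 : strat1 A1 A2 := fun h => match h with [::] => a1h | x :: r => (plan x (size r)).1 end.
Definition S2 : strat2 A1 A2 := fun h => match h with [::] => a2h | x :: r => (plan x (size r)).2 end.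

Lemma plan_nash x k : stage_nash u1 u2 (plan x k).
Proof. by rewrite /plan; case: ifP => _; case: ifP. Qed.

Lemma sum_plan (g : A1 * A2 -> R) x :
  \sum_(t < n1 + n2) g (plan x t) =
  g (if x.1 == a1h then r1 else P1) *+ n1 + g (if x.2 == a2h then r2 else P2) *+ n2.
Proof.
rewrite big_split_ord /=; congr (_ + _).
  transitivity (\sum_(i < n1) g (if x.1 == a1h then r1 else P1)).
    by apply: eq_bigr => i _; rewrite /plan /= ltn_ord.
  by rewrite sumr_const card_ord.
transitivity (\sum_(i < n2) g (if x.2 == a2h then r2 else P2)).
  by apply: eq_bigr => i _; rewrite /plan /= ltnNge leq_addr.
by rewrite sumr_const card_ord.
Qed.

Lemma cstr_SPE : SPE u1 u2 (n1 + n2).+1 S1 S2.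
Proof.
move=> k [|x r] Hk Hs.
  rewrite -Hs subn0.
  change (nashT u1 u2 (n1 + n2).+1 S1 S2).
  have E1 : forall y, cont1 S1 [:: y] = fs1 (plan y) by [].
  have E2 : forall y, cont2 S2 [:: y] = fs2 (plan y) by [].
  split=> s'.
    rewrite !payoff1_S E1 !E2 payoff1_fs /=.
    apply: le_trans; first (apply: lerD; [exact: lexx | apply: dev1_fs => t; exact: plan_nash]).
    have SP := sum_plan (fun a => u1 a.1 a.2); rewrite /= in SP; rewrite !SP /= !eqxx.
    case: eqP => [->|_]; first by [].
    by move: (I1 (s' [::])); lra.
  rewrite !payoff2_S E2 !E1 payoff2_fs /=.
  apply: le_trans; first (apply: lerD; [exact: lexx | apply: dev2_fs => t; exact: plan_nash]).
  have SP := sum_plan (fun a => u2 a.1 a.2); rewrite /= in SP; rewrite !SP /= !eqxx.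
  case: eqP => [->|_]; first by [].
  by move: (I2 (s' [::])); lra.
have -> : cont1 S1 (x :: r) = fs1 (fun j => plan x (size r + j)).
  by apply: functional_extensionality => h'; rewrite /cont1 /fs1 /= size_cat.
have -> : cont2 S2 (x :: r) = fs2 (fun j => plan x (size r + j)).
  by apply: functional_extensionality => h'; rewrite /cont2 /fs2 /= size_cat.
by apply: nash_fs => t; apply: plan_nash.
Qed.

Lemma cstr_main : ~ stage_nash u1 u2 (a1h, a2h) ->
  exists (T : nat) (s1 : strat1 A1 A2) (s2 : strat2 A1 A2),
      [/\ (0 < T)%N, SPE u1 u2 T s1 s2 & locally_suboptimal u1 u2 T s1 s2].
Proof.
move=> Hn; exists (n1 + n2).+1, S1, S2; split => //; first exact: cstr_SPE.
by exists 0%N, [::].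
Qed.
End Cstr.


Lemma contc1 (s1 : strat1 A1 A2) h x : cont1 (cont1 s1 h) [:: x] = cont1 s1 (rcons h x).
Proof. by apply: functional_extensionality => h'; rewrite /cont1 -cats1 -catA. Qed.
Lemma contc2 (s2 : strat2 A1 A2) h x : cont2 (cont2 s2 h) [:: x] = cont2 s2 (rcons h x).
Proof. by apply: functional_extensionality => h'; rewrite /cont2 -cats1 -catA. Qed.

Section Later.
Variables (T : nat) (s1 : strat1 A1 A2) (s2 : strat2 A1 A2) (k : nat).
Hypothesis Hn : forall h', (k <= size h')%N -> (size h' < T)%N -> stage_nash u1 u2 (s1 h', s2 h').

Lemma later1 v : (forall a, stage_nash u1 u2 a -> u1 a.1 a.2 = v) ->
  forall h, size h = k -> payoff1 u1 (T - k) (cont1 s1 h) (cont2 s2 h) = v *+ (T - k).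
Proof.
move=> Hv h Hh; transitivity (\sum_(t < T - k) v); last by rewrite sumr_const card_ord.
apply: eq_bigr => t _; rewrite /cont1 /cont2.
apply: (Hv (s1 (h ++ _), s2 (h ++ _))); apply: Hn; rewrite size_cat size_play Hh.
  exact: leq_addr.
by have := ltn_ord t; lia.
Qed.

Lemma later2 v : (forall a, stage_nash u1 u2 a -> u2 a.1 a.2 = v) ->
  forall h, size h = k -> payoff2 u2 (T - k) (cont1 s1 h) (cont2 s2 h) = v *+ (T - k).
Proof.
move=> Hv h Hh; transitivity (\sum_(t < T - k) v); last by rewrite sumr_const card_ord.
apply: eq_bigr => t _; rewrite /cont1 /cont2.
apply: (Hv (s1 (h ++ _), s2 (h ++ _))); apply: Hn; rewrite size_cat size_play Hh.
  exact: leq_addr.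
by have := ltn_ord t; lia.
Qed.
End Later.

Lemma oneshot1 T (s1 : strat1 A1 A2) (s2 : strat2 A1 A2) h v :
  (forall a, stage_nash u1 u2 a -> u1 a.1 a.2 = v) ->
  SPE u1 u2 T s1 s2 -> (size h < T)%N ->
  (forall h', (size h < size h')%N -> (size h' < T)%N -> stage_nash u1 u2 (s1 h', s2 h')) ->
  best_resp1 u1 (s1 h) (s2 h).
Proof.
move=> Hv HS Hk Hn; have [H1 _] := HS _ h Hk erefl.
apply/forallP => a1'.
have := H1 (fun h' => if h' is [::] then a1' else cont1 s1 h h').
rewrite -(subnSK Hk) !payoff1_S /=.
have E : forall x, cont1 (fun h' => if h' is [::] then a1' else cont1 s1 h h') [:: x]
   = cont1 (cont1 s1 h) [:: x] by [].
rewrite E !contc1 !contc2.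
rewrite !(later1 Hn Hv) ?size_rcons //.
by rewrite /cont1 /cont2 !cats0 lerD2r.
Qed.

Lemma oneshot2 T (s1 : strat1 A1 A2) (s2 : strat2 A1 A2) h v :
  (forall a, stage_nash u1 u2 a -> u2 a.1 a.2 = v) ->
  SPE u1 u2 T s1 s2 -> (size h < T)%N ->
  (forall h', (size h < size h')%N -> (size h' < T)%N -> stage_nash u1 u2 (s1 h', s2 h')) ->
  best_resp2 u2 (s1 h) (s2 h).
Proof.
move=> Hv HS Hk Hn; have [_ H2] := HS _ h Hk erefl.
apply/forallP => a2'.
have := H2 (fun h' => if h' is [::] then a2' else cont2 s2 h h').
rewrite -(subnSK Hk) !payoff2_S /=.
have E : forall x, cont2 (fun h' => if h' is [::] then a2' else cont2 s2 h h') [:: x]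
   = cont2 (cont2 s2 h) [:: x] by [].
rewrite E !contc1 !contc2.
rewrite !(later2 Hn Hv) ?size_rcons //.
by rewrite /cont1 /cont2 !cats0 lerD2r.
Qed.

Lemma last_bad T (s1 : strat1 A1 A2) (s2 : strat2 A1 A2) :
  locally_suboptimal u1 u2 T s1 s2 ->
  exists h, [/\ (size h < T)%N, ~ stage_nash u1 u2 (s1 h, s2 h) &
    forall h', (size h < size h')%N -> (size h' < T)%N -> stage_nash u1 u2 (s1 h', s2 h')].
Proof.
move=> [k [h [Hk Hs Hbad]]]; subst k.
have [n Hlt] : exists n, (T - size h < n)%N by exists (T - size h).+1.
elim: n h Hk Hbad Hlt => // n IH h Hk Hbad Hlt.
case: (classic (exists h', [/\ (size h < size h')%N, (size h' < T)%N & ~ stage_nash u1 u2 (s1 h', s2 h')])).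
  move=> [h' [H1 H2 H3]]; apply: (IH h') => //; lia.
move=> Hno; exists h; split => // h' H1 H2.
case: (boolP (stage_nash u1 u2 (s1 h', s2 h'))) => // Hb.
by exfalso; apply: Hno; exists h'; split => //; apply/negP.
Qed.

Section Vgen.
Variable w : A1 * A2 -> R.
Let V := undup [seq w a | a <- enum {: A1 * A2} & stage_nash u1 u2 a].

Lemma memV a : stage_nash u1 u2 a -> w a \in V.
Proof. by move=> Ha; rewrite mem_undup; apply: map_f; rewrite mem_filter Ha mem_enum. Qed.

Lemma inV y : y \in V -> exists a, stage_nash u1 u2 a /\ y = w a.
Proof. by rewrite mem_undup => /mapP [a]; rewrite mem_filter => /andP[Ha _] ->; exists a. Qed.

Lemma V_le1 : (size V <= 1)%N -> forall a b, stage_nash u1 u2 a -> stage_nash u1 u2 b -> w a = w b.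
Proof.
move=> Hs a b Ha Hb; apply/eqP; apply: contraLR Hs => Hab; rewrite -ltnNge.
have : (size [:: w a; w b] <= size V)%N.
  apply: uniq_leq_size; first by rewrite /= inE Hab.
  by move=> y; rewrite !inE => /orP[] /eqP ->; apply: memV.
by [].
Qed.

Lemma V_gt1 : (1 < size V)%N -> exists a b, [/\ stage_nash u1 u2 a, stage_nash u1 u2 b & w a < w b].
Proof.
move=> Hs.
have Hne : nth 0 V 0 != nth 0 V 1 by rewrite nth_uniq ?undup_uniq ?(ltnW Hs).
have [a [Ha ea]] := inV (mem_nth 0 (ltnW Hs)).
have [b [Hb eb]] := inV (mem_nth 0 Hs).
move: Hne; rewrite ea eb neq_lt => /orP[] H.
  by exists a, b.
by exists b, a.
Qed.

Lemma V_gt0 a : stage_nash u1 u2 a -> (0 < size V)%N.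
Proof. by move/memV; case: V. Qed.
End Vgen.

End Aux.

Theorem mainTheorem1 (R : realType) (A1 A2 : finType) (u1 u2 : A1 -> A2 -> R)
  (hA1 : (0 < #|A1|)%N) (hA2 : (0 < #|A2|)%N) :
  (exists (T : nat) (s1 : strat1 A1 A2) (s2 : strat2 A1 A2),
      [/\ (0 < T)%N, SPE u1 u2 T s1 s2 & locally_suboptimal u1 u2 T s1 s2])
  <->
  [\/ [/\ (1 < size (V1 u1 u2))%N, (1 < size (V2 u1 u2))%N &
          exists (a1 : A1) (a2 : A2), ~ stage_nash u1 u2 (a1, a2)],
      [/\ (1 < size (V1 u1 u2))%N, size (V2 u1 u2) = 1%N &
          exists (a1 a1' : A1) (a2 : A2), u1 a1 a2 < u1 a1' a2 /\ best_resp2 u2 a1 a2]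
    | [/\ size (V1 u1 u2) = 1%N, (1 < size (V2 u1 u2))%N &
          exists (a1 : A1) (a2 a2' : A2), u2 a1 a2 < u2 a1 a2' /\ best_resp1 u1 a1 a2]].
Proof.
pose w1 := fun a : A1 * A2 => u1 a.1 a.2.
pose w2 := fun a : A1 * A2 => u2 a.1 a.2.
have gt1_1 : (1 < size (V1 u1 u2))%N -> exists a b, [/\ stage_nash u1 u2 a, stage_nash u1 u2 b & w1 a < w1 b]
  := V_gt1 (u1 := u1) (u2 := u2) (w := w1).
have gt1_2 : (1 < size (V2 u1 u2))%N -> exists a b, [/\ stage_nash u1 u2 a, stage_nash u1 u2 b & w2 a < w2 b]
  := V_gt1 (u1 := u1) (u2 := u2) (w := w2).
have le1_1 : (size (V1 u1 u2) <= 1)%N -> forall a b, stage_nash u1 u2 a -> stage_nash u1 u2 b -> w1 a = w1 b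
  := V_le1 (u1 := u1) (u2 := u2) (w := w1).
have le1_2 : (size (V2 u1 u2) <= 1)%N -> forall a b, stage_nash u1 u2 a -> stage_nash u1 u2 b -> w2 a = w2 b
  := V_le1 (u1 := u1) (u2 := u2) (w := w2).
have gt0_1 : forall a, stage_nash u1 u2 a -> (0 < size (V1 u1 u2))%N
  := fun a => @V_gt0 _ _ _ u1 u2 w1 a.
have gt0_2 : forall a, stage_nash u1 u2 a -> (0 < size (V2 u1 u2))%N
  := fun a => @V_gt0 _ _ _ u1 u2 w2 a.
split.
- move=> [T [s1 [s2 [HT HS Hloc]]]].
  have [h [Hk Hbad Hn]] := last_bad Hloc.
  have BR1 : (size (V1 u1 u2) <= 1)%N -> best_resp1 u1 (s1 h) (s2 h).
    move=> Hs; case: (pickP (stage_nash u1 u2)) => [a0 Ha0 | Hno].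
      exact: (oneshot1 (v := w1 a0) (fun a Ha => le1_1 Hs a a0 Ha Ha0) HS Hk Hn).
    by apply: (oneshot1 (v := 0) _ HS Hk Hn) => a Ha; rewrite Hno in Ha.
  have BR2 : (size (V2 u1 u2) <= 1)%N -> best_resp2 u2 (s1 h) (s2 h).
    move=> Hs; case: (pickP (stage_nash u1 u2)) => [a0 Ha0 | Hno].
      exact: (oneshot2 (v := w2 a0) (fun a Ha => le1_2 Hs a a0 Ha Ha0) HS Hk Hn).
    by apply: (oneshot2 (v := 0) _ HS Hk Hn) => a Ha; rewrite Hno in Ha.
  case: (leqP (size (V1 u1 u2)) 1) => H1; case: (leqP (size (V2 u1 u2)) 1) => H2.
  + by exfalso; apply: Hbad; rewrite /stage_nash /= BR1 // BR2.
  + apply: Or33; split => //.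
      have [a [b [Ha _ _]]] := gt1_2 H2; have := gt0_1 a Ha; lia.
    have B1 := BR1 H1.
    have : ~~ best_resp2 u2 (s1 h) (s2 h) by apply/negP => B2; apply: Hbad; rewrite /stage_nash /= B1 B2.
    move/forallPn => [a2' Ha2']; exists (s1 h), (s2 h), a2'; split => //.
    by rewrite ltNge.
  + apply: Or32; split => //.
      have [a [b [Ha _ _]]] := gt1_1 H1; have := gt0_2 a Ha; lia.
    have B2 := BR2 H2.
    have : ~~ best_resp1 u1 (s1 h) (s2 h) by apply/negP => B1; apply: Hbad; rewrite /stage_nash /= B1 B2.
    move/forallPn => [a1' Ha1']; exists (s1 h), a1', (s2 h); split => //.
    by rewrite ltNge.
  + by apply: Or31; split => //; exists (s1 h), (s2 h).
- case.
  + move=> [H1 H2 [a1 [a2 Hna]]].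
    have [P1 [r1 [HP1 Hr1 lt1]]] := gt1_1 H1.
    have [P2 [r2 [HP2 Hr2 lt2]]] := gt1_2 H2.
    have [n1 I1] := gap_incentive (fun x => u1 x a2) (u1 a1 a2) lt1.
    have [n2 I2] := gap_incentive (fun x => u2 a1 x) (u2 a1 a2) lt2.
    exact: (cstr_main Hr1 HP1 Hr2 HP2 I1 I2 Hna).
  + move=> [H1 H2 [a1 [a1' [a2 [Hlt Hbr]]]]].
    have [P1 [r1 [HP1 Hr1 lt1]]] := gt1_1 H1.
    have [n1 I1] := gap_incentive (fun x => u1 x a2) (u1 a1 a2) lt1.
    have I2 : forall x2, u2 a1 x2 + u2 P1.1 P1.2 *+ 0 <= u2 a1 a2 + u2 P1.1 P1.2 *+ 0.
      by move=> x2; rewrite !mulr0n !addr0; move/forallP: Hbr; apply.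
    apply: (cstr_main Hr1 HP1 HP1 HP1 I1 I2).
    move/andP => [/forallP B _]; have := B a1'; rewrite leNgt Hlt //.
  + move=> [H1 H2 [a1 [a2 [a2' [Hlt Hbr]]]]].
    have [P2 [r2 [HP2 Hr2 lt2]]] := gt1_2 H2.
    have [n2 I2] := gap_incentive (fun x => u2 a1 x) (u2 a1 a2) lt2.
    have I1 : forall x1, u1 x1 a2 + u1 P2.1 P2.2 *+ 0 <= u1 a1 a2 + u1 P2.1 P2.2 *+ 0.
      by move=> x1; rewrite !mulr0n !addr0; move/forallP: Hbr; apply.
    apply: (cstr_main HP2 HP2 Hr2 HP2 I1 I2).
    move/andP => [_ /forallP B]; have := B a2'; rewrite leNgt Hlt //.
Qed.
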